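(* Given $c_0>0$ there exists $c>0$ such that for all $n\ge1$ and all integers $h$ with $0\le h\le c_0 n$, $|\mathcal A^h_n| \ge |\mathcal F^h_n| \ge c^n\, h^h\, n!$, and consequently $|\widetilde{\mathcal A}^h_n| \ge |\widetilde{\mathcal F}^h_n| \ge c^n h^h$.
   Context: All graphs are finite and simple; for a graph class $\mathcal B$ (closed under isomorphism), $\mathcal B_n$ is the set of graphs in $\mathcal B$ on vertex set $[n]$, and $\widetilde{\mathcal B}_n$ the set of unlabelled $n$-vertex graphs in $\mathcal B$. For a surface $S$, $\mathcal E^S$ is the class of graphs embeddable (not necessarily cellularly) in $S$. For an integer $h\ge0$: $\mathcal E^h$ is the class of graphs embeddable in some surface of Euler genus at most $h$; $\mathcal O\mathcal E^h$ (resp. $\mathcal N\mathcal E^h$) the same with only orientable (resp. non-orientable) surfaces, the sphere counting as both; $\mathcal A^h$ is any one of $\mathcal O\mathcal E^h,\mathcal N\mathcal E^h,\mathcal E^h,\mathcal O\mathcal E^h\cap\mathcal N\mathcal E^h$. $\mathcal F^h$ is the class of graphs $G$ every cellular embedding of which has Euler genus at most $h$; equivalently $e(G)-v(G)+\kappa(G)\le h$, $\kappa(G)$ the number of components. Convention $0^0=1$. *)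

(* Defs.v *)
From HB Require Import structures.
From mathcomp Require Import all_boot all_order all_algebra.
From mathcomp Require Import fingroup perm.
From mathcomp Require Import reals.
Set Implicit Arguments. Unset Strict Implicit. Unset Printing Implicit Defensive.
Import Order.TTheory GRing.Theory Num.Theory.

Definition graph (n : nat) := {set {set 'I_n}}.

Definition simpleg n (E : graph n) : bool := [forall e in E, #|e| == 2].

Definition adjg n (E : graph n) : rel 'I_n := fun x y => [set x; y] \in E.

Definition ncomp n (E : graph n) : nat :=
  #|[set [set y | connect (adjg E) x y] | x : 'I_n]|.

Definition inF (h : nat) n (E : graph n) : bool :=
  simpleg E && (#|E| + ncomp E <= h + n)%N.

(* ---------- Cellular embeddings as generalized maps (gems) -------------
   Flags of a graph H are triples (u,v,s) with uv an edge of H and s a side.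
   a0 swaps the endpoint, a2 swaps the side; a gem structure is given by a
   fixed-point-free involution a1 on flags fixing the vertex, such that the
   flags at each vertex form a single <a1,a2>-orbit.  Faces are the
   <a0,a1>-orbits; the embedding is orientable iff the flags can be
   2-coloured so that each a_i changes colour. *)
Definition flag (n : nat) := ('I_n * 'I_n * bool)%type.

Definition fvalid n (H : graph n) (x : flag n) : bool := [set x.1.1; x.1.2] \in H.

Definition a0 n (x : flag n) : flag n := (x.1.2, x.1.1, x.2).
Definition a2 n (x : flag n) : flag n := (x.1.1, x.1.2, ~~ x.2).

Definition is_gem n (H : graph n) (a1 : {ffun flag n -> flag n}) : bool :=
  [forall x, fvalid H x ==>
      [&& fvalid H (a1 x), a1 (a1 x) == x, a1 x != x & (a1 x).1.1 == x.1.1]]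
  && [forall x, forall y, [&& fvalid H x, fvalid H y & x.1.1 == y.1.1] ==>
        connect (fun p q : flag n => (q == a1 p) || (q == a2 p)) x y].

Definition nfaces n (H : graph n) (a1 : {ffun flag n -> flag n}) : nat :=
  if H == set0 then 1%N (* single vertex on the sphere: one face *)
  else #|[set [set y | connect (fun p q : flag n => (q == a0 p) || (q == a1 p)) x y]
          | x in [set x | fvalid H x]]|.

Definition egenus n (H : graph n) (a1 : {ffun flag n -> flag n}) : int :=
  (2 + #|H|)%:Z - (n + nfaces H a1)%:Z.

Definition orientable_gem n (H : graph n) (a1 : {ffun flag n -> flag n}) : bool :=
  [exists s : {ffun flag n -> bool}, [forall x, fvalid H x ==>
     [&& s (a0 x) != s x, s (a1 x) != s x & s (a2 x) != s x]]].

Inductive kind := OEk | NEk | Ek | OENEk.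

Definition good_embedding (k : kind) (h : nat) (n : nat) (H : graph n)
  (a1 : {ffun flag n -> flag n}) : bool :=
  let g := egenus H a1 in
  match k with
  | OEk => orientable_gem H a1 && (g <= h%:Z)%R
  | Ek => (g <= h%:Z)%R
  | NEk => (g <= h%:Z)%R && [|| ~~ orientable_gem H a1, (g < h%:Z)%R | g == 0%R]
  | OENEk => false
  end.

Arguments good_embedding k h {n} H a1.

(* G embeds in a surface of the relevant kind with Euler genus <= h iff G is a
   spanning subgraph of a connected simple graph H on the same vertex set
   having a cellular embedding of the relevant kind. *)
Definition inA1 (k : kind) (h : nat) n (E : graph n) : bool :=
  simpleg E &&
  [exists H : graph n, [&& simpleg H, E \subset H, (ncomp H <= 1)%N &
     [exists a1 : {ffun flag n -> flag n}, is_gem H a1 && good_embedding k h H a1]]].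

Definition inA (k : kind) (h : nat) n (E : graph n) : bool :=
  match k with
  | OENEk => inA1 OEk h E && inA1 NEk h E
  | _ => inA1 k h E
  end.

Definition lcount n (P : pred (graph n)) : nat := #|[set E : graph n | P E]|.

Definition isog n (E E' : graph n) : bool :=
  [exists s : {perm 'I_n}, E' == [set [set s x | x in e] | e : {set 'I_n} in E]].

Definition ucount n (P : pred (graph n)) : nat :=
  #|[set [set E' : graph n | P E' && isog E E'] | E in [set E : graph n | P E]]|.

(* Main.v *)
Require Import Defs.
From HB Require Import structures.
From mathcomp Require Import all_boot all_order all_algebra fingroup perm.
From mathcomp Require Import reals zify.
Set Implicit Arguments. Unset Strict Implicit. Unset Printing Implicit Defensive.
Import Order.TTheory GRing.Theory Num.Theory.

Section Basics.
Variable n : nat.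
Implicit Types E : graph n.

Lemma adj_sym E : symmetric (adjg E).
Proof. by move=> x y; rewrite /adjg setUC. Qed.

Lemma csym E : connect_sym (adjg E).
Proof. exact/sym_connect_sym/adj_sym. Qed.

Definition comp E x := [set y | connect (adjg E) x y].

Lemma compP E x y : reflect (comp E x = comp E y) (connect (adjg E) x y).
Proof.
apply: (iffP idP) => [cxy|eq].
  by apply/setP => z; rewrite !inE (same_connect (csym E) cxy).
have : y \in comp E y by rewrite inE connect0.
by rewrite -eq inE.
Qed.

Lemma ncompE E : ncomp E = #|[set comp E x | x : 'I_n]|.
Proof. by []. Qed.

Lemma conn_mono E1 E2 x y : E1 \subset E2 ->
  connect (adjg E1) x y -> connect (adjg E2) x y.
Proof.
move=> sE; apply: connect_sub => a b hab; apply: connect1.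
by move: hab; rewrite /adjg => /(subsetP sE).
Qed.

Lemma conn_inv (T : finType) (e : rel T) (P : pred T) x y :
  (forall a b, P a -> e a b -> P b) -> connect e x y -> P x -> P y.
Proof.
move=> hP /connectP [p pth ->]; elim: p x pth => [|z p IH] x //=.
by move=> /andP [exz pz] Px; apply: IH pz (hP _ _ Px exz).
Qed.

Lemma conn_invP (T : finType) (e : rel T) (P : T -> Prop) x y :
  (forall a b, P a -> e a b -> P b) -> connect e x y -> P x -> P y.
Proof.
move=> hP /connectP [p pth ->]; elim: p x pth => [|z p IH] x //=.
by move=> /andP [exz pz] Px; apply: IH pz (hP _ _ Px exz).
Qed.

Lemma ncomp_le1 E x0 : (forall x, connect (adjg E) x0 x) -> (ncomp E <= 1)%N.
Proof.
move=> hc; rewrite ncompE -(cards1 (comp E x0)); apply: subset_leq_card.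
by apply/subsetP => C /imsetP [x _ ->]; rewrite inE; apply/eqP/esym/compP.
Qed.

Lemma ncomp_le_n E : (ncomp E <= n)%N.
Proof. by rewrite ncompE; apply: leq_trans (leq_imset_card _ _) _; rewrite card_ord. Qed.

Lemma ncomp_gt0 E : (0 < n)%N -> (0 < ncomp E)%N.
Proof.
move=> n0; rewrite ncompE card_gt0; apply/set0Pn.
by exists (comp E (Ordinal n0)); apply: imset_f.
Qed.

Lemma ncomp_merge E' E x y : E' \subset E -> [set x; y] \in E ->
  ~~ connect (adjg E') x y -> (ncomp E < ncomp E')%N.
Proof.
move=> sE xyE nc.
pose g (C : {set 'I_n}) := [set z | [exists a in C, connect (adjg E) a z]].
have gE a : g (comp E' a) = comp E a.
  apply/setP => z; rewrite !inE; apply/existsP/idP => [[b /andP [] ]|caz].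
    by rewrite inE => /(conn_mono sE) cab cbz; apply: connect_trans cab cbz.
  by exists a; rewrite inE connect0.
rewrite !ncompE.
have -> : [set comp E x | x : 'I_n] = g @: [set comp E' x | x : 'I_n].
  by rewrite -imset_comp; apply: eq_imset => a /=; rewrite gE.
rewrite ltn_neqAle leq_imset_card andbT.
apply/negP => /imset_injP inj.
have : comp E' x = comp E' y.
  apply: inj; try by apply: imset_f.
  by rewrite !gE; apply/compP/connect1.
by move/compP; rewrite (negbTE nc).
Qed.

End Basics.

Section Forest.
Variable n : nat.
Implicit Types E : graph n.

Definition nonbridge E := exists x y, [/\ x != y, [set x; y] \in E &
   connect (adjg (E :\ [set x; y])) x y].

Lemma forest_bound E : simpleg E -> ~ nonbridge E -> (#|E| + ncomp E <= n)%N.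
Proof.
move: {2}#|E| (leqnn #|E|) => k; elim: k E => [|k IH] E.
  rewrite leqn0 cards_eq0 => /eqP -> _ _; rewrite cards0 add0n; exact: ncomp_le_n.
move=> hk sE nb.
have [/eqP E0|/set0Pn [e eE]] := boolP (E == set0).
  by rewrite E0 cards0 add0n; exact: ncomp_le_n.
have /cards2P [x [y [xy exy]]] : #|e| == 2 by move/forallP: sE => /(_ e); rewrite eE.
subst e.
have sE' : E :\ [set x; y] \subset E by apply: subsetDl.
have h1 : (#|E :\ [set x; y]| <= k)%N by move: hk; rewrite (cardsD1 [set x; y]) eE.
have h2 : simpleg (E :\ [set x; y]).
  by apply/forallP => f; apply/implyP => /(subsetP sE') fE; move/forallP: sE => /(_ f); rewrite fE.
have h3 : ~ nonbridge (E :\ [set x; y]).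
  move=> [a [b [ab abE c]]]; apply: nb; exists a, b; split => //.
    exact: (subsetP sE').
  by apply: conn_mono c; apply: setSD.
have := IH _ h1 h2 h3.
have nc : ~~ connect (adjg (E :\ [set x; y])) x y.
  by apply/negP => c; apply: nb; exists x, y.
have := ncomp_merge sE' eE nc.
rewrite (cardsD1 [set x; y] E) eE /= => a b.
by rewrite add1n addSn -addnS; apply: leq_trans b; rewrite leq_add2l.
Qed.

Lemma extend_conn E : (0 < n)%N -> simpleg E -> exists H : graph n,
  [/\ simpleg H, E \subset H, (ncomp H <= 1)%N & (#|H| + 1 <= #|E| + ncomp E)%N].
Proof.
move=> n0; move: {2}(ncomp E) (leqnn (ncomp E)) => k; elim: k E => [|k IH] E hk sE.
  by move: (ncomp_gt0 E n0); rewrite leqn0 in hk; rewrite (eqP hk).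
have [allc|] := boolP [forall x, forall y, connect (adjg E) x y].
  exists E; split => //.
    apply: (ncomp_le1 (x0 := Ordinal n0)) => x.
    by move/forallP: allc => /(_ (Ordinal n0)) /forallP.
  by rewrite leq_add2l ncomp_gt0.
rewrite negb_forall => /existsP [x]; rewrite negb_forall => /existsP [y nc].
have xy : x != y by apply: contraNneq nc => ->; rewrite connect0.
have nin : [set x; y] \notin E by apply: contra nc => h; apply: connect1.
set E2 := [set x; y] |: E.
have sE2 : E \subset E2 by apply: subsetUr.
have lt := ncomp_merge sE2 (setU11 _ _) nc.
have s2 : simpleg E2.
  apply/forallP => f; apply/implyP; rewrite in_setU1 => /orP [/eqP ->|fE].
    by rewrite cards2 xy.
  by move/forallP: sE => /(_ f); rewrite fE.
have [H [sH EH cH bH]] := IH E2 (ltnSE (leq_trans lt hk)) s2.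
exists H; split => //; first exact: subset_trans EH.
move: bH lt; rewrite /E2 cardsU1 nin /= add1n.
move: #|H| #|E| (ncomp _) (ncomp E) => a b c d; lia.
Qed.

End Forest.

Section Gem.
Variable n : nat.
Variable H : graph n.
Variable w : 'I_n -> 'I_n -> bool.

Definition nb u := enum [set v | [set u; v] \in H].
Definition ttf (x : flag n) := x.2 (+) w x.1.1 x.1.2.
Definition mkf u v t : flag n := (u, v, t (+) w u v).
Definition a1f (x : flag n) :=
  if ttf x then mkf x.1.1 (next (nb x.1.1) x.1.2) false
  else mkf x.1.1 (prev (nb x.1.1) x.1.2) true.
Definition gem := [ffun x => a1f x].

Lemma validE x : fvalid H x = (x.1.2 \in nb x.1.1).
Proof. by rewrite /fvalid mem_enum inE. Qed.

Lemma mkf_tt u v t : ttf (mkf u v t) = t.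
Proof. by rewrite /ttf /mkf /= addbK. Qed.

Lemma flagE x : x = mkf x.1.1 x.1.2 (ttf x).
Proof. by case: x => [[u v] b]; rewrite /mkf /ttf /= addbK. Qed.

Lemma nb_uniq u : uniq (nb u).
Proof. exact: enum_uniq. Qed.

Lemma a1_tt x : ttf (gem x) = ~~ ttf x.
Proof. by rewrite ffunE /a1f; case: (ttf x); rewrite mkf_tt. Qed.

Lemma a2_tt x : ttf (a2 x) = ~~ ttf x.
Proof. by rewrite /ttf /a2 /= addNb. Qed.

Lemma a1_v x : (gem x).1.1 = x.1.1.
Proof. by rewrite ffunE /a1f; case: (ttf x). Qed.

Lemma a1_valid x : fvalid H x -> fvalid H (gem x).
Proof.
rewrite !validE ffunE /a1f; case: (ttf x) => /=; by rewrite ?mem_next ?mem_prev.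
Qed.

Lemma a1_inv x : gem (gem x) = x.
Proof.
rewrite [in RHS](flagE x).
rewrite [gem x]ffunE /a1f; case E: (ttf x); rewrite ffunE /a1f mkf_tt /=.
  by rewrite prev_next ?nb_uniq.
by rewrite next_prev ?nb_uniq.
Qed.

Lemma a1_neq x : gem x != x.
Proof. by apply/negP => /eqP h; move: (a1_tt x); rewrite h; case: (ttf x). Qed.

Definition R12 := fun p q : flag n => (q == gem p) || (q == a2 p).

Lemma to_true x : connect R12 x (mkf x.1.1 x.1.2 true).
Proof.
case E: (ttf x); first by rewrite [x in connect _ x]flagE E connect0.
apply: connect1; rewrite /R12; apply/orP; right; apply/eqP.
by rewrite [RHS]flagE a2_tt E.
Qed.

Lemma from_true x : connect R12 (mkf x.1.1 x.1.2 true) x.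
Proof.
case E: (ttf x); first by rewrite [x in connect _ _ x]flagE E connect0.
apply: connect1; rewrite /R12; apply/orP; right; apply/eqP.
by rewrite {1}[x]flagE E /mkf /a2 /= negbK.
Qed.

Lemma step_next u v : connect R12 (mkf u v true) (mkf u (next (nb u) v) true).
Proof.
apply: (@connect_trans _ _ (mkf u (next (nb u) v) false)).
  apply: connect1; apply/orP; left; apply/eqP.
  by rewrite ffunE /a1f mkf_tt.
apply: connect1; apply/orP; right; apply/eqP.
by rewrite /mkf /a2 /=.
Qed.

Lemma at_vertex x y : fvalid H x -> fvalid H y -> x.1.1 = y.1.1 -> connect R12 x y.
Proof.
rewrite !validE => vx vy exy.
apply: connect_trans (to_true x) _.
apply: connect_trans _ (from_true y).
rewrite -exy.
have := fconnect_cycle (cycle_next (nb_uniq x.1.1)) vx.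
move=> /(_ y.1.2); rewrite -exy in vy; rewrite vy => fc.
pose P := fun v => connect R12 (mkf x.1.1 x.1.2 true) (mkf x.1.1 v true).
have : P y.1.2.
  apply: (conn_inv (P := P)) fc _; last exact: connect0.
  by move=> a b Pa /eqP <-; apply: connect_trans Pa (step_next _ _).
by [].
Qed.

Lemma gem_ok : is_gem H gem.
Proof.
apply/andP; split.
  apply/forallP => x; apply/implyP => vx.
  by rewrite a1_valid // a1_inv eqxx a1_neq a1_v eqxx.
apply/forallP => x; apply/forallP => y; apply/implyP => /and3P [vx vy /eqP e].
exact: at_vertex.
Qed.

End Gem.

Section Genus.
Variable n : nat.
Variable H : graph n.
Hypothesis sH : simpleg H.

Lemma edgeP e : e \in H -> exists x y, x != y /\ e = [set x; y].
Proof. by move=> eH; apply/cards2P; move/forallP: sH => /(_ e); rewrite eH. Qed.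

Lemma nfaces_ge1 a : (1 <= nfaces H a)%N.
Proof.
rewrite /nfaces; case: ifP => // /set0Pn [e eH].
have [x [y [_ exy]]] := edgeP eH; subst e; rewrite card_gt0; apply/set0Pn; eexists; apply: (imset_f _ (x := (x, y, false))).
by rewrite inE /fvalid.
Qed.

Lemma egenus_le a h : (#|H| + 1 <= h + n)%N -> (egenus H a <= h%:Z)%R.
Proof.
move=> hb; have := nfaces_ge1 a; rewrite /egenus.
move: (nfaces H a) #|H| hb => f e hb hf.
rewrite lerBlDr -!PoszD lez_nat; lia.
Qed.

Lemma validNeq x : fvalid H x -> x.1.1 != x.1.2.
Proof.
rewrite /fvalid => vx; apply/negP => /eqP exy.
by move/forallP: sH => /(_ [set x.1.1; x.1.2]); rewrite vx exy setUid cards1.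
Qed.

Lemma orientable_lt : orientable_gem H (gem H (fun u v => (u < v)%N)).
Proof.
apply/existsP; exists [ffun x => ttf (fun u v => (u < v)%N) x].
apply/forallP => x; apply/implyP => vx.
have := a1_tt H (fun u v => (u<v)%N) x; rewrite !ffunE => ->.
have nbb (b : bool) : (~~ b != b) by case: b.
rewrite a2_tt !nbb !andbT.
have := validNeq vx; rewrite /ttf /a0 /=; case: x vx => [[u v] b] /= _ uv.
move: uv; rewrite -val_eqE /=; case: ltngtP => //= _ _; by case: b.
Qed.

Variables p q : 'I_n.
Hypothesis e0H : [set p; q] \in H.
Hypothesis pq : p != q.
Hypothesis cpq : connect (adjg (H :\ [set p; q])) p q.

Definition wt (u v : 'I_n) := (u < v)%N && ([set u; v] != [set p; q]).

Lemma neqb (b c : bool) : b != c -> b = ~~ c.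
Proof. by case: b; case: c. Qed.

Lemma nonorientable_tw : ~~ orientable_gem H (gem H wt).
Proof.
apply/negP => /existsP [s /forallP hs].
pose c x := s x (+) ttf wt x.
have hs' x : fvalid H x -> [/\ s (a0 x) = ~~ s x, s (gem H wt x) = ~~ s x & s (a2 x) = ~~ s x].
  by move=> vx; have /and3P [h1 h2 h3] := implyP (hs x) vx; split; apply: neqb.
have ca1 x : fvalid H x -> c (gem H wt x) = c x.
  by move=> vx; rewrite /c; have [_ -> _] := hs' x vx; rewrite a1_tt addbN addNb negbK.
have ca2 x : fvalid H x -> c (a2 x) = c x.
  by move=> vx; rewrite /c; have [_ _ ->] := hs' x vx; rewrite a2_tt addbN addNb negbK.
have va0 x : fvalid H x -> fvalid H (a0 x).
  by rewrite /fvalid /a0 /= setUC.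
have ca0 x : fvalid H x -> [set x.1.1; x.1.2] != [set p; q] -> c (a0 x) = c x.
  move=> vx ne; rewrite /c; have [-> _ _] := hs' x vx.
  suff -> : ttf wt (a0 x) = ~~ ttf wt x by rewrite addNb addbN negbK.
  have := validNeq vx; case: x vx ne => [[u v] b] /= _ ne uv.
  rewrite /ttf /wt /= setUC ne !andbT -addbN; congr (_ (+) _).
  move: uv; rewrite -val_eqE /=; case: ltngtP => //.
have ca0t x : fvalid H x -> [set x.1.1; x.1.2] = [set p; q] -> c (a0 x) = ~~ c x.
  move=> vx e; rewrite /c; have [-> _ _] := hs' x vx.
  suff -> : ttf wt (a0 x) = ttf wt x by rewrite addNb.
  case: x vx e => [[u v] b] /= _ e.
  by rewrite /ttf /wt /= setUC e eqxx !andbF.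
have vconst x y : fvalid H x -> fvalid H y -> x.1.1 = y.1.1 -> c y = c x.
  move=> vx vy exy.
  suff /andP [_ /eqP] : fvalid H y && (c y == c x) by [].
  apply: (conn_inv (P := fun a => fvalid H a && (c a == c x))) (at_vertex wt vx vy exy) _; last by rewrite vx eqxx.
  move=> a b /andP [va /eqP ca] /orP [] /eqP ->.
    by rewrite a1_valid // ca1 // ca eqxx.
  by rewrite ca2 // ca eqxx andbT.
pose P u := forall v b, fvalid H (u, v, b) -> c (u, v, b) = c (p, q, false).
have Pq : P q.
  apply: (conn_invP (P := P)) cpq _; last first.
    by move=> v b vv; apply: vconst.
  move=> u u' Pu; rewrite /adjg in_setD1 => /andP [ne uH] v b vv.
  have vf : fvalid H (u, u', false) by [].
  rewrite (@vconst (u', u, false)) //; last by rewrite /fvalid setUC.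
  by rewrite -(Pu u' false vf) -(ca0 _ vf) //; rewrite eq_sym.
have := Pq p false; rewrite /fvalid setUC e0H => /(_ isT).
have -> : (q, p, false) = a0 (p, q, false) by [].
by rewrite ca0t //; case: (c _).
Qed.

End Genus.

Lemma egenus_le' n (H : graph n) a : simpleg H ->
  (egenus H a <= (#|H| + 1)%:Z - n%:Z)%R.
Proof.
move=> sH; have := nfaces_ge1 sH a; rewrite /egenus.
move: (nfaces H a) #|H| => f e hf.
lia.
Qed.

Lemma inF_inA k h n (E : graph n) : (0 < n)%N -> inF h E -> inA k h E.
Proof.
move=> n0 /andP [sE bE].
have [H [sH EH cH bH]] := extend_conn n0 sE.
have gH a : (egenus H a <= (#|H| + 1)%:Z - n%:Z)%R by apply: egenus_le'.
have OE : inA1 OEk h E.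
  rewrite /inA1 sE /=; apply/existsP; exists H; rewrite sH EH cH /=.
  apply/existsP; exists (gem H (fun u v => (u < v)%N)); rewrite gem_ok /= orientable_lt //=.
  by apply: le_trans (gH _) _; move: bH bE; move: #|H| #|E| (ncomp E) => a b c; lia.
have NE : inA1 NEk h E.
  rewrite /inA1 sE /=; apply/existsP; exists H; rewrite sH EH cH /=.
  have [lt|] := boolP ((#|E| + ncomp E < h + n)%N || (h == 0%N)).
    apply/existsP; exists (gem H (fun u v => (u < v)%N)); rewrite gem_ok /=.
    have g := gH (gem H (fun u v => (u < v)%N)).
    move: (egenus _ _) g => g hg.
    have -> : (g <= h%:Z)%R by move: bH bE lt hg; move: #|H| #|E| (ncomp E) => a b c; case: (h == 0%N) / eqP; lia.
    rewrite /=; case/orP: lt => [lt|/eqP h0].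
      by rewrite orbC (_ : (g < h%:Z)%R) // ; move: bH lt hg; move: #|H| #|E| (ncomp E) => a b c; lia.
    subst h; rewrite orbC; case: (ltrgtP g 0) => //; move: hg; lia.
  rewrite negb_or -leqNgt => /andP [ge hn0].
  have [/existsP [p /existsP [q /and3P [pq pqE cpq]]]|nnb] :=
    boolP [exists p, exists q, [&& p != q, [set p; q] \in E & connect (adjg (E :\ [set p; q])) p q]].
    apply/existsP; exists (gem H (wt p q)); rewrite gem_ok /=.
    rewrite (nonorientable_tw sH (subsetP EH _ pqE) _) //=.
      rewrite andbT; apply: le_trans (gH _) _; move: bH bE; move: #|H| #|E| (ncomp E) => a b c; lia.
    by apply: conn_mono cpq; apply: setSD.
  exfalso; have := forest_bound sE.
  have : ~ nonbridge E.
    move=> [p [q [pq pqE cpq]]]; move/negP: nnb; apply; apply/existsP; exists p.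
    by apply/existsP; exists q; rewrite pq pqE cpq.
  move=> h1 /(_ h1); move: ge bE hn0; move: #|E| (ncomp E) => a b; case: (h == 0%N) / eqP; lia.
case: k => //=; last by rewrite OE NE.
move: OE; rewrite /inA1 => /andP [-> /existsP [H' /and4P [a b c /existsP [a1 /andP [g /andP [_ ge]]]]]].
by apply/existsP; exists H'; rewrite a b c; apply/existsP; exists a1; rewrite g.
Qed.

Lemma lcount_le k h n : (0 < n)%N ->
  (lcount (inF h (n := n)) <= lcount (inA k h (n := n)))%N.
Proof.
move=> n0; apply: subset_leq_card; apply/subsetP => E; rewrite !inE.
exact: inF_inA.
Qed.

Section Act.
Variable n : nat.
Definition act (s : {perm 'I_n}) (E : graph n) : graph n :=
  [set [set s x | x in e] | e : {set 'I_n} in E].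

Lemma act1 E : act 1 E = E.
Proof.
rewrite /act -[RHS]imset_id; apply: eq_imset => e.
by rewrite -[RHS]imset_id; apply: eq_imset => x; rewrite perm1.
Qed.

Lemma actK s E : act s^-1%g (act s E) = E.
Proof.
rewrite /act -imset_comp -[RHS]imset_id; apply: eq_imset => e /=.
by rewrite -imset_comp -[RHS]imset_id; apply: eq_imset => x /=; rewrite permK.
Qed.

Lemma isogP E E' : reflect (exists s, E' = act s E) (isog E E').
Proof. by apply: (iffP existsP) => [[s /eqP ->]|[s ->]]; exists s. Qed.

Lemma lcount_ucount (P : pred (graph n)) :
  (lcount P <= ucount P * n`!)%N.
Proof.
rewrite /lcount /ucount -card_Sn -cardsT.
set S := [set E : graph n | P E].
set C := [set [set E' | P E' && isog E E'] | E in S].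
pose f (Ss : {set graph n} * {perm 'I_n}) := act Ss.2 (odflt set0 [pick E in Ss.1]).
rewrite -cardsX; apply: leq_trans (leq_imset_card f _).
apply: subset_leq_card; apply/subsetP => E ES.
set Cl := [set E' | P E' && isog E E'].
have EC : Cl \in C by apply: imset_f.
have ECl : E \in Cl by rewrite inE; move: ES; rewrite inE => ->; apply/isogP; exists 1%g; rewrite act1.
have [E1 [pk E1in]] : exists E1, [pick E in Cl] = Some E1 /\ E1 \in Cl.
  by case: pickP => [E1 h|/(_ E)]; [exists E1 | rewrite ECl].
move: (E1in); rewrite inE => /andP [_ /isogP [s eq]].
apply/imsetP; exists (Cl, s^-1%g); first by rewrite inE EC inE.
by rewrite /f /= pk /= eq actK.
Qed.
Lemma ucount_mono (P Q : pred (graph n)) : (forall E, P E -> Q E) ->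
  (ucount P <= ucount Q)%N.
Proof.
move=> PQ; rewrite /ucount.
pose psi (S : {set graph n}) := S :&: [set E | P E].
set SP := [set E | P E].
have -> : [set [set E' | P E' && isog E E'] | E in SP] =
   psi @: [set [set E' | Q E' && isog E E'] | E in SP].
  rewrite -imset_comp; apply: eq_imset => E /=; apply/setP => E'.
  rewrite !inE; case F: (P E') => //=; rewrite ?andbF ?andbT //.
  by rewrite PQ.
apply: leq_trans (leq_imset_card _ _) _.
apply: subset_leq_card; apply: imsetS; apply/subsetP => E; rewrite !inE.
exact: PQ.
Qed.
End Act.

Lemma ucount_le k h n : (0 < n)%N ->
  (ucount (inF h (n := n)) <= ucount (inA k h (n := n)))%N.
Proof. by move=> n0; apply: ucount_mono => E; apply: inF_inA. Qed.


Lemma pair_eq n (a b c d : 'I_n) : (b < a)%N -> (d < c)%N ->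
  [set a; b] = [set c; d] -> a = c /\ b = d.
Proof.
move=> ba dc e.
have ha : a \in [set c; d] by rewrite -e !inE eqxx.
have hc : c \in [set a; b] by rewrite e !inE eqxx.
have hb : b \in [set c; d] by rewrite -e !inE eqxx orbT.
suff: val a = val c /\ val b = val d by case=> /val_inj -> /val_inj ->.
move: ha hc hb ba dc; rewrite !inE -!val_eqE /=.
move: (val a) (val b) (val c) (val d) => a' b' c' d'.
move=> /orP[]/eqP h1 /orP[]/eqP h2 /orP[]/eqP h3 h4 h5; lia.
Qed.

Section Lower.
Variables (n h : nat).
Hypothesis n0 : (0 < n)%N.

Definition i0 : 'I_n := Ordinal n0.
Definition Sup := [set j : 'I_n | (n <= 2 * j)%N].
Definition Q := [set e : {set 'I_n} | (e \subset Sup) && (#|e| == 2)].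
Definition QT := {e : {set 'I_n} | e \in Q}.
Definition Fam (i : 'I_n) := [set j : 'I_n | (2 * j <= i)%N].
Definition Tp (p : {ffun 'I_n -> 'I_n}) : graph n :=
  [set [set i; p i] | i in [set i : 'I_n | p i != i]].
Definition Phi (pY : {ffun 'I_n -> 'I_n} * {set QT}) : graph n :=
  Tp pY.1 :|: [set val y | y in pY.2].
Definition Dom := setX [set p : {ffun 'I_n -> 'I_n} | p \in family Fam]
                       [set Y : {set QT} | #|Y| == h].

Lemma famP p : p \in family Fam -> forall i, (2 * p i <= i)%N.
Proof. by move=> /familyP hp i; have := hp i; rewrite inE. Qed.

Lemma fam_lt p : p \in family Fam -> forall i, p i != i -> (p i < i)%N.
Proof.
move=> hp i; have := famP hp i; rewrite -val_eqE /=.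
move: (val (p i)) (val i) => a b; lia.
Qed.

Lemma fam_0 p : p \in family Fam -> forall i, val i = 0 -> p i = i.
Proof.
move=> hp i i0; apply: val_inj; have := famP hp i; rewrite i0 /=.
rewrite i0; move: (val (p i)) => a; lia.
Qed.

Lemma Tp_notQ p : p \in family Fam -> forall e, e \in Tp p -> e \notin Q.
Proof.
move=> hp e /imsetP [i]; rewrite inE => ne ->.
rewrite inE; apply/negP => /andP [/subsetP sS _].
have := sS (p i); rewrite !inE eqxx orbT => /(_ isT).
have := famP hp i; have := ltn_ord i; move: (val (p i)) (val i) => a b; lia.
Qed.

Lemma PhiQ pY : pY \in Dom -> Phi pY :&: Q = [set val y | y in pY.2].
Proof.
case: pY => p Y; rewrite inE /= => /andP [hp _]; rewrite inE in hp.
rewrite /Phi /= setIUl.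
have -> : Tp p :&: Q = set0.
  apply/setP => e; rewrite in_setI in_set0; case E: (e \in Tp p) => //=.
  exact: negbTE (Tp_notQ hp E).
rewrite set0U; apply/setIidPl; apply/subsetP => e /imsetP [y _ ->].
exact: (valP y).
Qed.

Lemma PhiT pY : pY \in Dom -> Phi pY :\: Q = Tp pY.1.
Proof.
case: pY => p Y; rewrite inE /= => /andP [hp _]; rewrite inE in hp.
rewrite /Phi /= setDUl.
have -> : [set val y | y in Y] :\: Q = set0.
  apply/setP => e; rewrite in_setD in_set0; apply/negP => /andP [nq /imsetP [y _ ey]].
  by move: nq; rewrite ey (valP y).
rewrite setU0; apply/setDidPl; rewrite disjoint_sym disjoints_subset.
apply/subsetP => e eQ; rewrite inE; apply/negP => /(Tp_notQ hp); by rewrite eQ.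
Qed.

Lemma Phi_inj : {in Dom &, injective Phi}.
Proof.
move=> [p Y] [p' Y'] hD hD' e.
have eY : Y = Y'.
  have := PhiQ hD; rewrite e PhiQ //= => /esym; apply: imset_inj; exact: val_inj.
have eT : Tp p = Tp p'.
  by have := PhiT hD; rewrite e PhiT.
subst Y'; congr (_, _).
move: hD hD'; rewrite !inE /= => /andP [hp _] /andP [hp' _].
apply/ffunP => i.
have [/eqP i0|ni0] := boolP (val i == 0).
  by rewrite (fam_0 hp i0) (fam_0 hp' i0).
have pi : p i != i.
  apply: contra ni0 => /eqP pi; have := famP hp i; rewrite pi.
  move=> hh; apply/eqP; move: hh => /=; lia.
have : [set i; p i] \in Tp p' by rewrite -eT; apply: imset_f; rewrite inE.
case/imsetP => j; rewrite inE => pj eq.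
have [-> ->] := pair_eq (fam_lt hp pi) (fam_lt hp' pj) eq.
by [].
Qed.

Lemma Phi_inF pY : pY \in Dom -> inF h (Phi pY).
Proof.
case: pY => p Y; rewrite inE /= => /andP [hp hY]; rewrite inE in hp; rewrite inE in hY.
apply/andP; split.
  apply/forallP => e; apply/implyP; rewrite /Phi /= in_setU => /orP [].
    case/imsetP => i; rewrite inE => pi ->; by rewrite cards2 (eq_sym i) pi.
  by case/imsetP => y _ ->; have := valP y; rewrite inE => /andP [_ ->].
have cT : (#|Tp p| <= n.-1)%N.
  apply: leq_trans (leq_imset_card _ _) _.
  have -> : n.-1 = #|[set~ i0]| by rewrite cardsC1 card_ord.
  apply: subset_leq_card; apply/subsetP => i.
  rewrite !inE; apply: contra => /eqP ->; rewrite fam_0 //.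
have cY : (#|[set val y | y in Y]| <= h)%N by rewrite -(eqP hY); exact: leq_imset_card.
have cE : (#|Phi (p, Y)| <= n.-1 + h)%N.
  apply: leq_trans (leq_card_setU _ _) _; exact: leq_add.
have cK : (ncomp (Phi (p, Y)) <= 1)%N.
  apply: (ncomp_le1 (x0 := i0)) => x.
  move: {2}(val x) (leqnn (val x)) => m; elim: m x => [|m IH] x hx.
    by rewrite (_ : x = i0) ?connect0 //; apply: val_inj => /=; move: hx; rewrite leqn0 => /eqP.
  have [/eqP px|px] := boolP (p x == x).
    have : val x = 0.
      apply/eqP; have := famP hp x; rewrite px; move=> /=; lia.
    by move=> x0; rewrite (_ : x = i0) ?connect0 //; apply: val_inj.
  have lt := fam_lt hp px.
  apply: connect_trans (IH (p x) _) (connect1 _).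
    by move: lt hx => /=; lia.
  rewrite /adjg /Phi in_setU; apply/orP; left; rewrite setUC; apply: imset_f; by rewrite inE.
move: cE cK; move: (#|_|) (ncomp _) => a b; lia.
Qed.

Lemma card_Dom : #|Dom| = (\prod_(i < n) #|Fam i| * 'C(#|Q|, h))%N.
Proof.
rewrite cardsX; congr (_ * _).
  have -> : #|[set p : {ffun 'I_n -> 'I_n} | p \in family Fam]| = #|family Fam|.
    by apply: eq_card => p; rewrite inE.
  rewrite card_family foldrE big_map big_enum; apply: eq_bigl => i; by [].
by rewrite card_draws card_sig.
Qed.


Lemma card_Fam (i : 'I_n) : ((i./2).+1 <= #|Fam i|)%N.
Proof.
have le : ((i./2).+1 <= n)%N by apply: leq_ltn_trans (ltn_ord i); by rewrite -leq_double -!muln2; move: (odd_double_half i); rewrite -muln2; move: (i./2) (odd i) (val i) => a o b; case: o; lia.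
have winj : injective (widen_ord le) by move=> a b /(congr1 val) /= e; apply: val_inj.
rewrite -[X in (X <= _)%N](card_ord (i./2).+1) -(card_imset _ winj).
apply: subset_leq_card; apply/subsetP => j /imsetP [k _ ->]; rewrite inE /=.
have := ltn_ord k; have := odd_double_half i; rewrite -!muln2.
move: (nat_of_ord k) => a; move: (nat_of_ord i) (odd i) (i./2) => b o c; case: o; lia.
Qed.

Lemma card_Sup : (n./2 <= #|Sup|)%N.
Proof.
have := odd_double_half n; rewrite -!muln2 => hn.
have lt (k : 'I_(n./2)) : (k + odd n + n./2 < n)%N.
  have := ltn_ord k; move: hn; move: (nat_of_ord k) => a; move: (odd n) (n./2) => o c; case: o; lia.
pose f (k : 'I_(n./2)) : 'I_n := Ordinal (lt k).
have finj : injective f.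
  move=> a b /(congr1 val) /= e; apply: val_inj => /=; move: e; lia.
rewrite -[X in (X <= _)%N](card_ord (n./2)) -(card_imset _ finj).
apply: subset_leq_card; apply/subsetP => j /imsetP [k _ ->]; rewrite inE /=.
move: hn; move: (nat_of_ord k) => a; move: (odd n) (n./2) => o c; case: o; lia.
Qed.

Lemma card_Q : ('C(n./2, 2) <= #|Q|)%N.
Proof.
pose ST := {x : 'I_n | x \in Sup}.
pose g (e : {set ST}) : {set 'I_n} := [set val x | x in e].
have ginj : injective g by apply: imset_inj; exact: val_inj.
have h1 : ('C(n./2, 2) <= 'C(#|{: ST}|, 2))%N.
  by apply: leq_bin2l; rewrite card_sig; apply: leq_trans card_Sup _; apply: subset_leq_card; apply/subsetP => x; rewrite !inE.
apply: leq_trans h1 _.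
rewrite -card_draws -(card_imset _ ginj); apply: subset_leq_card.
apply/subsetP => e /imsetP [d]; rewrite inE => d2 ->; rewrite inE; apply/andP; split.
  by apply/subsetP => x /imsetP [y _ ->]; exact: (valP y).
by rewrite /g card_imset //; exact: val_inj.
Qed.

Lemma lower_F : (\prod_(i < n) (i./2).+1 * 'C('C(n./2, 2), h) <= lcount (inF h (n := n)))%N.
Proof.
apply: (@leq_trans #|Dom|).
  rewrite card_Dom; apply: leq_mul; first by apply: leq_prod => i _; exact: card_Fam.
  exact: leq_bin2l card_Q.
rewrite -(card_in_imset Phi_inj); apply: subset_leq_card; apply/subsetP => E /imsetP [pY hD ->].
by rewrite inE; apply: Phi_inF.
Qed.

End Lower.

Lemma expLe m n e : (m <= n)%N -> (m ^ e <= n ^ e)%N.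
Proof. move=> le; elim: e => [|e IH] //; rewrite !expnS; exact: leq_mul. Qed.

Lemma factLe m n : (m <= n)%N -> (m`! <= n`!)%N.
Proof.
move=> le; elim: n le => [|n IH]; first by rewrite leqn0 => /eqP ->.
rewrite leq_eqVlt => /orP [/eqP -> //|]; rewrite ltnS => /IH h.
by rewrite factS; apply: leq_trans h _; rewrite leq_pmull.
Qed.

Lemma fact_le_exp h : (h`! <= h ^ h)%N.
Proof.
elim: h => [|h IH] //; rewrite factS expnS leq_mul2l; apply/orP; right.
apply: leq_trans IH _; exact: expLe.
Qed.

Lemma ffact_ge M h : ((M - h) ^ h <= M ^_ h)%N.
Proof.
elim: h => [|h IH]; first by rewrite ffactn0.
rewrite ffactnSr expnSr; apply: leq_mul; last by rewrite leq_sub2l.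
by apply: leq_trans IH; apply: expLe; rewrite leq_sub2l.
Qed.

Lemma bin_lower M h : ((M - h) ^ h <= 'C(M, h) * h ^ h)%N.
Proof.
apply: leq_trans (ffact_ge M h) _; rewrite -bin_ffact leq_mul2l fact_le_exp orbT //.
Qed.

Lemma prod_half n : (n`! <= 2 ^ n * \prod_(i < n) (i./2).+1)%N.
Proof.
elim: n => [|n IH]; first by rewrite big_ord0.
rewrite big_ord_recr /= factS expnSr mulnC.
have h2 : (n.+1 <= 2 * (n./2).+1)%N.
  have := odd_double_half n; rewrite -muln2; move: (odd n) (n./2) => o c; case: o; lia.
move: IH h2; move: (n`!) (2 ^ n) (\prod_(i < n) (i./2).+1) (n./2) => f a P c IH h2.
have hh := leq_mul IH h2; apply: leq_trans hh _.
by rewrite -!mulnA leq_mul2l; apply/orP; right; rewrite mulnCA mulnC.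
Qed.

Lemma key D n m h C : (0 < D)%N -> (32 * D + 6 <= n)%N -> (n <= 2 * m + 1)%N ->
  (h <= D * n)%N -> (2 * C = m * (m - 1))%N -> (h * h <= 64 * D * D * (C - h))%N.
Proof.
move=> D0 nN nm hD eC.
have m1 : (16 * D + 2 <= m)%N by lia.
have h3 : (h <= 3 * D * m)%N by nia.
have h4 : (4 * h <= m * m - 2 * m)%N by nia.
have h5 : (m * m <= 4 * (C - h))%N by nia.
have h6 : (h * h <= 9 * D * D * (m * m))%N by nia.
nia.
Qed.

Lemma lcount_pos n h : (0 < lcount (inF h (n := n)))%N.
Proof.
rewrite /lcount card_gt0; apply/set0Pn; exists set0; rewrite inE /inF.
apply/andP; split; first by apply/forallP => e; rewrite inE.
by rewrite cards0 add0n; apply: leq_trans (ncomp_le_n _) (leq_addl _ _).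
Qed.

Lemma main_nat D : (0 < D)%N -> exists K, (0 < K)%N /\ forall n h, (0 < n)%N -> (h <= D * n)%N ->
  (h ^ h * n`! <= K ^ n * lcount (inF h (n := n)))%N /\
  (h ^ h <= K ^ n * ucount (inF h (n := n)))%N.
Proof.
move=> D0.
set L := 64 * D * D; set N0 := 32 * D + 6.
set B := (D * N0) ^ (D * N0) * N0`!.
have B0 : (0 < B)%N by rewrite /B muln_gt0 fact_gt0 expn_gt0 muln_gt0 D0 /N0 addn_gt0 orbT.
have L0 : (0 < L)%N by rewrite /L !muln_gt0 D0.
exists (B * (2 * L ^ D)); split; first by rewrite muln_gt0 B0 muln_gt0 expn_gt0 L0.
move=> n h n0 hD.
set K := B * (2 * L ^ D).
have K0 : (0 < K)%N by rewrite muln_gt0 B0 muln_gt0 expn_gt0 L0.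
have l0 := lcount_pos n h.
have g1 : (h ^ h * n`! <= K ^ n * lcount (inF h (n := n)))%N.
  have [small|big] := ltnP n N0.
    apply: leq_trans (leq_pmulr _ l0); apply: (@leq_trans K); last first.
      by rewrite -{1}(expn1 K); apply: leq_pexp2l.
    apply: (@leq_trans B); last by rewrite /K leq_pmulr // muln_gt0 expn_gt0 L0.
    apply: leq_mul; last exact: factLe (ltnW small).
    have hN : (h <= D * N0)%N by apply: leq_trans hD _; rewrite leq_mul2l ltnW ?orbT.
    apply: leq_trans (expLe _ hN) _; apply: leq_pexp2l => //.
    by rewrite muln_gt0 D0 /N0 addn_gt0 orbT.
  set m := n./2; set C := 'C(m, 2).
  have eC : (2 * C = m * (m - 1))%N.
    have := bin_ffact m 2; rewrite ffactnSr ffactn1 (_ : 2`! = 2) // => e.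
    by rewrite /C mulnC e.
  have nm : (n <= 2 * m + 1)%N.
    have := odd_double_half n; rewrite -muln2 /m; move: (odd n) (n./2) => o c; case: o; lia.
  have hk := key D0 big nm hD eC.
  have P1 := prod_half n.
  set P := \prod_(i < n) (i./2).+1 in P1.
  have lo : (P * 'C(C, h) <= lcount (inF h (n := n)))%N by apply: lower_F.
  have hh0 : (0 < h ^ h)%N by rewrite expn_gt0; case: (h) => [|k] //; rewrite orbT.
  suff : (h ^ h * n`! <= L ^ h * 2 ^ n * (P * 'C(C, h)))%N.
    move=> s; apply: leq_trans s _.
    apply: leq_mul lo.
    apply: (@leq_trans ((2 * L ^ D) ^ n)).
      rewrite expnMn mulnC leq_mul2l; apply/orP; right.
      by rewrite -expnM; apply: leq_pexp2l => //; rewrite mulnC.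
    by apply: expLe; rewrite /K leq_pmull.
  rewrite -(leq_pmul2r hh0).
  apply: (@leq_trans ((h * h) ^ h * (2 ^ n * P))).
    by rewrite expnMn mulnAC leq_mul2l P1 orbT.
  apply: (@leq_trans ((L * (C - h)) ^ h * (2 ^ n * P))).
    by rewrite leq_mul2r expLe ?orbT.
  rewrite expnMn.
  have bl := bin_lower C h.
  move: bl; move: ((C - h) ^ h) ('C(C, h)) (h ^ h) (L ^ h) (2 ^ n) => a b c d e bl.
  apply: (@leq_trans (d * e * P * (b * c))); last by rewrite !mulnA.
  rewrite [X in (X <= _)%N](_ : _ = d * e * P * a); last by nia.
  by rewrite leq_mul2l bl orbT.
split => //.
have lu := lcount_ucount (inF h (n := n)).
rewrite -(leq_pmul2r (fact_gt0 n)); apply: leq_trans g1 _.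
by rewrite -mulnA leq_mul2l lu orbT.
Qed.

Local Open Scope ring_scope.

Lemma real_step (R : realType) (K a b : nat) n : (0 < K)%N -> (a <= K ^ n * b)%N ->
  (K%:R : R)^-1 ^+ n * a%:R <= b%:R.
Proof.
move=> K0 hab; rewrite exprVn -natrX ler_pdivrMl ?ltr0n ?expn_gt0 ?K0 //.
by rewrite -natrM ler_nat.
Qed.

Theorem corollary1 (R : realType) (c0 : R) : 0 < c0 ->
  exists2 c : R, 0 < c &
    forall (k : kind) (n h : nat), (1 <= n)%N -> (h%:R <= c0 * n%:R) ->
      [/\ (lcount (inF h (n := n)) <= lcount (inA k h (n := n)))%N,
          c ^+ n * (h ^ h)%:R * (n`!)%:R <= (lcount (inF h (n := n)))%:R,
          (ucount (inF h (n := n)) <= ucount (inA k h (n := n)))%N &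
          c ^+ n * (h ^ h)%:R <= (ucount (inF h (n := n)))%:R].
Proof.
move=> c00.
set D := (Num.bound c0).+1.
have cD : c0 <= D%:R.
  apply: ltW; apply: lt_le_trans (archi_boundP (ltW c00)) _.
  by rewrite ler_nat /D leqnSn.
have [K [K0 hK]] := main_nat (D := D) (ltn0Sn _).
exists ((K%:R : R)^-1); first by rewrite invr_gt0 ltr0n.
move=> k n h n1 hc.
have hD : (h <= D * n)%N.
  rewrite -(ler_nat R) natrM; apply: le_trans hc _.
  by rewrite ler_wpM2r // ler0n.
have [g1 g2] := hK n h n1 hD.
split.
- exact: lcount_le.
- by rewrite -mulrA -natrM; apply: real_step.
- exact: ucount_le.
- exact: real_step.
Qed.
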